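(* Let $0<q<1$, $\Re\eta>-1$, $\mu\ge0$, $\lambda\ge1$, and let $\phi(z)=1+\sum_{n\ge1}E_nz^n$ be analytic in $\Delta$ with $\Re\phi>0$, $\phi(0)=1$, $E_1>0$. Put $M_k=\mu-(\mu-1)\widetilde{[k]}_q$ and $N=\mu-(\mu-1)\widetilde{[2]}_q^{\,2}$, $$\Omega=2(\lambda\widetilde{[3]}_q-1)M_3L_3+\lambda\big(\lambda M_2^2-N\big)\widetilde{[2]}_q^{\,2}L_2^2,$$ $$\Theta=2(\lambda\widetilde{[3]}_q-1)M_3E_1^2L_3+\lambda\big\{\lambda M_2^2(E_1^2+2E_1-2E_2)-NE_1^2\big\}\widetilde{[2]}_q^{\,2}L_2^2,$$ and assume $M_2,M_3,\Omega,\Theta$ are nonzero. If $f(z)=z+\sum_{n\ge2}a_nz^n$ belongs to $\widetilde{\mathcal{S}^*_{\Sigma}}{}^{\eta}_q(\mu,\lambda;\phi)$, then $$|a_2|\le\min\left\{\frac{E_1}{\lambda|M_2L_2|\widetilde{[2]}_q},\ \sqrt{\frac{2(|E_2-E_1|+E_1)}{|\Omega|}},\ \frac{E_1\sqrt{2E_1}}{\sqrt{|\Theta|}}\right\}$$ and $$|a_3|\le\frac{E_1}{(\lambda\widetilde{[3]}_q-1)|M_3L_3|}+\min\left\{\frac{E_1^2}{\lambda^2M_2^2\widetilde{[2]}_q^{\,2}|L_2|^2},\ \frac{2(|E_2-E_1|+E_1)}{|\Omega|}\right\}.$$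
   Context: $\Delta=\{z\in\mathbb{C}:|z|<1\}$. $\Sigma$ denotes the class of analytic $f(z)=z+\sum_{n\ge2}a_nz^n$ on $\Delta$ that are univalent and whose inverse $g=f^{-1}$ (with $g(w)=w-a_2w^2+(2a_2^2-a_3)w^3-\cdots$) extends univalently to $\Delta$. For $0<q<1$ and $\chi\in\mathbb{C}$, $\widetilde{[\chi]}_q=\frac{q^{\chi}-q^{-\chi}}{q-q^{-1}}$ (for $n\in\mathbb N$, $\widetilde{[n]}_q=\sum_{k=0}^{n-1}q^{n-1-2k}$). The symmetric $q$-derivative: $\widetilde{\mathcal D}_qF(z)=\frac{F(qz)-F(q^{-1}z)}{(q-q^{-1})z}$ ($z\neq0$), $\widetilde{\mathcal D}_qF(0)=F'(0)$. For $\Re\eta>-1$, the generalized Bernardi operator acts on $f=z+\sum_{n\ge2}a_nz^n$ by $\mathcal J^{\eta}_qf(z)=z+\sum_{n\ge2}L_na_nz^n$, where $L_n=\widetilde{[1+\eta]}_q/\widetilde{[n+\eta]}_q$. Subordination $F\prec G$ means $F=G\circ h$ with $h$ analytic on $\Delta$, $h(0)=0$, $|h|<1$. Non-integer powers are principal branches equal to $1$ at the origin. The class $\widetilde{\mathcal{S}^*_{\Sigma}}{}^{\eta}_q(\mu,\lambda;\phi)$ ($\mu\ge0$, $\lambda\ge1$) consists of $f\in\Sigma$, $g=f^{-1}$, such that, writing $F=\mathcal J^\eta_qf$ and $G=\mathcal J^\eta_qg$, $$\left\{\frac{2z[\widetilde{\mathcal D}_qF(z)]^{\lambda}}{F(z)-F(-z)}\right\}^{\mu}\left\{\frac{2\{\widetilde{\mathcal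 D}_q[z\widetilde{\mathcal D}_qF(z)]\}^{\lambda}}{\widetilde{\mathcal D}_q[F(z)-F(-z)]}\right\}^{1-\mu}\prec\phi(z)$$ and the same expression with $F,z$ replaced by $G,w$ is subordinate to $\phi(w)$, for $z,w\in\Delta$. *)

(* Defs.v *)
From Stdlib Require Import Reals.
From Coquelicot Require Import Coquelicot.

Set Implicit Arguments.
Local Open Scope C_scope.

Definition Cexp (z : C) : C :=
  (exp (Re z) * cos (Im z), exp (Re z) * sin (Im z))%R.

Definition qpowC (q : R) (chi : C) : C := Cexp (chi * RtoC (ln q)).

Definition qbr (q : R) (chi : C) : C :=
  (qpowC q chi - qpowC q (- chi)) / RtoC (q - / q)%R.

Definition qnat (q : R) (n : nat) : R := ((q ^ n - / q ^ n) / (q - / q))%R.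

Definition Lq (q : R) (eta : C) (n : nat) : C :=
  qbr q (1 + eta) / qbr q (RtoC (INR n) + eta).

Definition ps := nat -> C.

Definition psone : ps := fun n => match n with O => 1 | _ => 0 end.
Definition psadd (A B : ps) : ps := fun n => A n + B n.
Definition pssub (A B : ps) : ps := fun n => A n - B n.
Definition pscale (c : C) (A : ps) : ps := fun n => c * A n.
Definition psmul (A B : ps) : ps :=
  fun n => sum_n (fun k => A k * B (n - k)%nat) n.
Fixpoint psnpow (A : ps) (k : nat) : ps :=
  match k with O => psone | S k' => psmul A (psnpow A k') end.
Definition psmulz (A : ps) : ps :=
  fun n => match n with O => 0 | S m => A m end.
(** division by z (meaningful when A 0 = 0) *)
Definition psdivz (A : ps) : ps := fun n => A (S n).
Definition psdil (c : C) (A : ps) : ps := fun n => Cpow c n * A n.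
(** composition phi(h(z)) (meaningful when h 0%nat = 0) *)
Definition pscomp (phi h : ps) : ps :=
  fun n => sum_n (fun k => phi k * psnpow h k n) n.

Fixpoint gbinom (r : R) (k : nat) : R :=
  match k with
  | O => 1%R
  | S k' => (gbinom r k' * (r - INR k') / INR (S k'))%R
  end.

(** P^r for a series with P 0 = 1: principal branch (value 1 at the origin),
    i.e. the binomial series sum_k binom(r,k) (P - 1)^k. *)
Definition pspow (P : ps) (r : R) : ps :=
  fun n => sum_n (fun k => RtoC (gbinom r k) * psnpow (pssub P psone) k n) n.

(** 1/Y for Y 0 <> 0, and X / Y *)
Definition psinv (Y : ps) : ps :=
  pscale (/ Y 0%nat) (pspow (pscale (/ Y 0%nat) Y) (-1)).
Definition psdiv (X Y : ps) : ps := psmul X (psinv Y).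

(** symmetric q-derivative:
    (F(qz) - F(q^{-1} z)) / ((q - q^{-1}) z) *)
Definition psDq (q : R) (F : ps) : ps :=
  pscale (/ RtoC (q - / q)%R)
    (psdivz (pssub (psdil (RtoC q) F) (psdil (RtoC (/ q)) F))).

Definition Jq (q : R) (eta : C) (a : ps) : ps :=
  fun n => match n with O | S O => a n | _ => Lq q eta n * a n end.

(** The series of
  {2z[D_q F]^lam/(F(z)-F(-z))}^mu {2{D_q[z D_q F]}^lam / D_q[F(z)-F(-z)]}^(1-mu) *)
Definition ratio1 (q lam : R) (F : ps) : ps :=
  psdiv (psdivz (psmulz (pscale 2 (pspow (psDq q F) lam))))
        (psdivz (pssub F (psdil (-1) F))).
Definition ratio2 (q lam : R) (F : ps) : ps :=
  psdiv (pscale 2 (pspow (psDq q (psmulz (psDq q F))) lam))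
        (psDq q (pssub F (psdil (-1) F))).
Definition Sexpr (q mu lam : R) (F : ps) : ps :=
  psmul (pspow (ratio1 q lam F) mu) (pspow (ratio2 q lam F) (1 - mu)).

Definition inDisk (z : C) : Prop := (Cmod z < 1)%R.

Definition analytic_disk (a : ps) : Prop := forall z, inDisk z -> ex_pseries a z.

Definition univalent_disk (a : ps) : Prop :=
  analytic_disk a /\
  forall z w v, inDisk z -> inDisk w -> is_pseries a z v -> is_pseries a w v -> z = w.

(** Subordination P < phi: P = phi o h with h analytic on the disk,
    h(0)=0, |h|<1 (as identity of power series at 0, equivalently on Delta). *)
Definition subord (P phi : ps) : Prop :=
  exists h : ps, analytic_disk h /\ h 0%nat = 0 /\
    (forall z v, inDisk z -> is_pseries h z v -> inDisk v) /\
    forall n, P n = pscomp phi h n.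

(** g (coefficients b) is the inverse of f (coefficients a) near 0 and
    extends univalently to the disk. *)
Definition inverse_ext (a b : ps) : Prop :=
  univalent_disk b /\
  exists r : R, (0 < r)%R /\
    forall w v, (Cmod w < r)%R -> is_pseries b w v ->
      inDisk v /\ is_pseries a v w.

Definition in_Sigma (a b : ps) : Prop :=
  a 0%nat = 0 /\ a 1%nat = 1 /\ univalent_disk a /\ inverse_ext a b.

Definition in_class (q : R) (eta : C) (mu lam : R) (E : ps) (a : ps) : Prop :=
  exists b : ps, in_Sigma a b /\
    subord (Sexpr q mu lam (Jq q eta a)) E /\
    subord (Sexpr q mu lam (Jq q eta b)) E.

(* Main.v *)
Require Import Defs.
From Stdlib Require Import Reals Lra Lia Arith.
From Coquelicot Require Import Coquelicot.
Local Open Scope C_scope.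

Lemma s0 (f : nat -> C) : sum_n f 0 = f 0%nat.
Proof. apply sum_O. Qed.
Lemma s1 (f : nat -> C) : sum_n f 1 = f 0%nat + f 1%nat.
Proof. rewrite sum_Sn, sum_O. reflexivity. Qed.
Lemma s2 (f : nat -> C) : sum_n f 2 = f 0%nat + f 1%nat + f 2%nat.
Proof. rewrite !sum_Sn, sum_O. reflexivity. Qed.

Ltac sums := rewrite ?s0, ?s1, ?s2.

Lemma mul0 A B : psmul A B 0%nat = A 0%nat * B 0%nat.
Proof. unfold psmul. sums. reflexivity. Qed.
Lemma mul1 A B : psmul A B 1%nat = A 0%nat * B 1%nat + A 1%nat * B 0%nat.
Proof. unfold psmul. sums. reflexivity. Qed.
Lemma mul2 A B : psmul A B 2%nat = A 0%nat * B 2%nat + A 1%nat * B 1%nat + A 2%nat * B 0%nat.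
Proof. unfold psmul. sums. reflexivity. Qed.

Lemma gb0 r : gbinom r 0 = 1%R. Proof. reflexivity. Qed.
Lemma gb1 r : gbinom r 1 = r. Proof. simpl; field. Qed.
Lemma gb2 r : gbinom r 2 = (r * (r - 1) / 2)%R. Proof. simpl; field. Qed.

Lemma pow_coefs (P : ps) r : P 0%nat = 1 ->
  pspow P r 0%nat = 1 /\ pspow P r 1%nat = RtoC r * P 1%nat /\
  pspow P r 2%nat = RtoC r * P 2%nat + RtoC (r * (r - 1) / 2) * P 1%nat ^ 2.
Proof.
  intros H0. unfold pspow. sums. rewrite gb0, gb1, gb2.
  unfold psnpow, pssub. repeat rewrite ?mul0, ?mul1, ?mul2. unfold psone. simpl.
  rewrite H0. repeat split; ring.
Qed.

Lemma RtoCm1 : RtoC (-1) = - (1).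
Proof. unfold RtoC, Copp. simpl. f_equal; lra. Qed.

Lemma inv_coefs (Y : ps) : Y 0%nat <> 0 ->
  psinv Y 0%nat = / Y 0%nat /\ psinv Y 1%nat = - Y 1%nat / Y 0%nat ^ 2 /\
  psinv Y 2%nat = Y 1%nat ^ 2 / Y 0%nat ^ 3 - Y 2%nat / Y 0%nat ^ 2.
Proof.
  intros H.
  assert (E : forall n, psinv Y n = / Y 0%nat * pspow (pscale (/ Y 0%nat) Y) (-1) n) by reflexivity.
  destruct (pow_coefs (pscale (/ Y 0%nat) Y) (-1)) as [e0 [e1 e2]].
  { unfold pscale. field. auto. }
  rewrite !E, e0, e1, e2. unfold pscale.
  replace ((-1 * (-1 - 1) / 2)%R) with 1%R by field.
  rewrite RtoCm1.
  repeat split; field; auto.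
Qed.

Lemma div_coefs (X Y : ps) : Y 0%nat <> 0 ->
  psdiv X Y 0%nat = X 0%nat / Y 0%nat /\
  psdiv X Y 1%nat = X 1%nat / Y 0%nat - X 0%nat * Y 1%nat / Y 0%nat ^ 2 /\
  psdiv X Y 2%nat = X 2%nat / Y 0%nat - X 1%nat * Y 1%nat / Y 0%nat ^ 2
     + X 0%nat * (Y 1%nat ^ 2 / Y 0%nat ^ 3 - Y 2%nat / Y 0%nat ^ 2).
Proof.
  intros H. destruct (inv_coefs Y H) as [e0 [e1 e2]]. unfold psdiv.
  rewrite mul0, mul1, mul2, e0, e1, e2.
  repeat split; field; auto.
Qed.

Lemma Dq_coef q F n : (0 < q < 1)%R ->
  psDq q F n = RtoC (qnat q (S n)) * F (S n).
Proof.
  intros Hq. unfold psDq, pscale, psdivz, pssub, psdil, qnat.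
  assert (Hd : (q - / q <> 0)%R).
  { assert (/ q > 1)%R. { rewrite <- Rinv_1. apply Rinv_lt_contravar; lra. } lra. }
  rewrite <- !RtoC_pow. rewrite pow_inv.
  rewrite RtoC_div by auto. rewrite !RtoC_minus. field.
  intro HH. apply Hd, RtoC_inj. rewrite RtoC_minus. exact HH.
Qed.

Lemma qnat1 q : (0 < q < 1)%R -> qnat q 1 = 1%R.
Proof.
  intros Hq. unfold qnat. simpl.
  assert (/ q > 1)%R. { rewrite <- Rinv_1. apply Rinv_lt_contravar; lra. }
  field. split; [lra|]. assert (q*q < 1*1)%R by (apply Rmult_le_0_lt_compat; lra). lra.
Qed.


Section Comp.
Variables (q mu lam : R) (F : ps).
Hypothesis Hq : (0 < q < 1)%R.
Hypothesis F1 : F 1%nat = 1.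
Let x := RtoC (qnat q 2).
Let y := RtoC (qnat q 3).

Lemma r1_coefs :
  ratio1 q lam F 0%nat = 1 /\ ratio1 q lam F 1%nat = RtoC lam * x * F 2%nat /\
  ratio1 q lam F 2%nat = (RtoC lam * y - 1) * F 3%nat
     + RtoC lam * (RtoC lam - 1) / 2 * x ^ 2 * F 2%nat ^ 2.
Proof.
  destruct (pow_coefs (psDq q F) lam) as [p0 [p1 p2]].
  { rewrite Dq_coef, qnat1, F1 by auto. simpl. ring. }
  unfold ratio1.
  destruct (div_coefs (psdivz (psmulz (pscale 2 (pspow (psDq q F) lam))))
     (psdivz (pssub F (psdil (-1) F)))) as [d0 [d1 d2]].
  { unfold psdivz, pssub, psdil. simpl. rewrite F1. 
    intro HH. apply (f_equal fst) in HH. simpl in HH. lra. }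
  rewrite d0, d1, d2. unfold psdivz, psmulz, pscale, pssub, psdil. simpl.
  rewrite p0, p1, p2, !Dq_coef, ?qnat1, ?F1 by auto.
  rewrite RtoC_div by lra. rewrite RtoC_mult, RtoC_minus.
  fold x y.
  repeat split; field.
Qed.

Lemma r2_coefs :
  ratio2 q lam F 0%nat = 1 /\ ratio2 q lam F 1%nat = RtoC lam * x ^ 2 * F 2%nat /\
  ratio2 q lam F 2%nat = (RtoC lam * y ^ 2 - y) * F 3%nat
     + RtoC lam * (RtoC lam - 1) / 2 * x ^ 4 * F 2%nat ^ 2.
Proof.
  destruct (pow_coefs (psDq q (psmulz (psDq q F))) lam) as [p0 [p1 p2]].
  { rewrite Dq_coef by auto. unfold psmulz. rewrite Dq_coef, qnat1, F1 by auto. simpl. ring. }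
  unfold ratio2.
  destruct (div_coefs (pscale 2 (pspow (psDq q (psmulz (psDq q F))) lam))
     (psDq q (pssub F (psdil (-1) F)))) as [d0 [d1 d2]].
  { rewrite Dq_coef, qnat1 by auto. unfold pssub, psdil. simpl. rewrite F1. 
    intro HH. apply (f_equal fst) in HH. simpl in HH. lra. }
  rewrite d0, d1, d2. unfold pscale. 
  rewrite p0, p1, p2, !Dq_coef by auto. unfold psmulz, pssub, psdil.
  rewrite !Dq_coef, ?qnat1, ?F1 by auto. simpl.
  rewrite RtoC_div by lra. rewrite RtoC_mult, RtoC_minus.
  fold x y.
  repeat split; field.
Qed.

Lemma S_coefs :
  let M2 := RtoC mu - (RtoC mu - 1) * x in
  let M3 := RtoC mu - (RtoC mu - 1) * y in
  let N := RtoC mu - (RtoC mu - 1) * x ^ 2 in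
  Sexpr q mu lam F 1%nat = RtoC lam * x * M2 * F 2%nat /\
  Sexpr q mu lam F 2%nat = (RtoC lam * y - 1) * M3 * F 3%nat
     + RtoC lam * x ^ 2 * (RtoC lam * M2 ^ 2 - N) / 2 * F 2%nat ^ 2.
Proof.
  intros M2 M3 N.
  destruct r1_coefs as [a0 [a1 a2]]. destruct r2_coefs as [b0 [b1 b2]].
  destruct (pow_coefs _ mu a0) as [c0 [c1 c2]].
  destruct (pow_coefs _ (1 - mu) b0) as [e0 [e1 e2]].
  unfold Sexpr. rewrite mul1, mul2, c0, c1, c2, e0, e1, e2, a1, a2, b1, b2.
  rewrite !RtoC_div by lra. rewrite !RtoC_mult, !RtoC_minus.
  unfold M2, M3, N. split; field.
Qed.
End Comp.

Definition psum (c : ps) (z : C) (N : nat) : C := sum_n (fun k => z ^ k * c k) N.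

Lemma Cmod_sub_sym (x y : C) : Cmod (x - y) = Cmod (y - x).
Proof. replace (x - y) with (- (y - x)) by ring. apply Cmod_opp. Qed.

Lemma lim_le (s : nat -> C) v c M N :
  filterlim s eventually (locally v) ->
  (forall n, (N <= n)%nat -> (Cmod (s n - c) <= M)%R) -> (Cmod (v - c) <= M)%R.
Proof.
  intros Hl Hb. apply Rnot_lt_le. intro H.
  assert (Hs2 : (0 < sqrt 2)%R) by (apply sqrt_lt_R0; lra).
  assert (He : (0 < (Cmod (v - c) - M) / (2 * sqrt 2))%R).
  { apply Rdiv_lt_0_compat; lra. }
  destruct (proj1 (filterlim_locally s v) Hl (mkposreal _ He)) as [N' HN'].
  specialize (HN' (max N N') ltac:(lia)). specialize (Hb (max N N') ltac:(lia)).
  apply C_NormedModule_mixin_compat2 in HN'. simpl in HN'.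
  change (minus (s (max N N')) v) with (s (max N N') - v) in HN'.
  assert (T := Cmod_triangle (v - s (max N N')) (s (max N N') - c)).
  replace (v - s (max N N') + (s (max N N') - c)) with (v - c) in T by ring.
  rewrite (Cmod_sub_sym v (s (max N N'))) in T.
  assert (sqrt 2 * ((Cmod (v - c) - M) / (2 * sqrt 2)) = (Cmod (v - c) - M)/2)%R
    by (field; lra).
  rewrite H0 in HN'. lra.
Qed.

Lemma geom_sum (t : R) (a m : nat) : (0 <= t < 1)%R -> (a <= S m)%nat ->
  sum_n_m (fun k => t ^ k)%R a m = ((t ^ a - t ^ (S m)) / (1 - t))%R.
Proof.
  intros Ht. induction m; intros Ha.
  - destruct a as [|[|a]]; [ | | lia].
    + rewrite sum_n_n. simpl. match goal with |- ?a = ?b => change (@eq R a b) end; field. lra.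
    + rewrite sum_n_m_zero by lia. simpl. change (@zero R_AbelianMonoid) with 0%R; match goal with |- ?a = ?b => change (@eq R a b) end; field. lra.
  - destruct (Nat.eq_dec a (S (S m))) as [->|Hne].
    + rewrite sum_n_m_zero by lia. change (@zero R_AbelianMonoid) with 0%R; match goal with |- ?a = ?b => change (@eq R a b) end; field. lra.
    + rewrite sum_n_Sm by lia. rewrite IHm by lia. change (plus ?x ?y) with (x + y)%R; match goal with |- ?a = ?b => change (@eq R a b) end.
      simpl. field. lra.
Qed.

Lemma geom_le (t : R) (a m : nat) : (0 <= t < 1)%R ->
  (sum_n_m (fun k => t ^ k)%R a m <= t ^ a / (1 - t))%R.
Proof.
  intros Ht. destruct (le_lt_dec a (S m)).
  - rewrite geom_sum by auto. unfold Rdiv. apply Rmult_le_compat_r.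
    + apply Rlt_le, Rinv_0_lt_compat. lra.
    + assert (0 <= t ^ S m)%R by (apply pow_le; lra). lra.
  - rewrite sum_n_m_zero by lia. change (@zero R_AbelianMonoid) with 0%R.
    apply Rdiv_le_0_compat; [apply pow_le|]; lra.
Qed.

Lemma coef_bound (c : ps) (z : C) : ex_pseries c z ->
  exists B, forall n, (Cmod (c n) * Cmod z ^ n <= B)%R.
Proof.
  intros [l Hl].
  destruct (filterlim_bounded (sum_n (fun k => scal (pow_n z k) (c k)))) as [M HM].
  { exists l. exact Hl. }
  exists (2 * M)%R. intros n.
  assert (HM0 : (0 <= M)%R). { specialize (HM 0%nat). eapply Rle_trans; [apply Cmod_ge_0|]; exact HM. }
  assert (E : (Cmod (c n) * Cmod z ^ n = Cmod (z ^ n * c n))%R).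
  { rewrite Cmod_mult, Cmod_pow. ring. }
  rewrite E. destruct n.
  - specialize (HM 0%nat). rewrite sum_O in HM. change (Cmod (z ^ 0 * c 0%nat)%C <= M)%R in HM. lra.
  - assert (HH := HM (S n)). rewrite sum_Sn in HH. specialize (HM n).
    change (Cmod (sum_n (fun k => z ^ k * c k) n + z ^ S n * c (S n))%C <= M)%R in HH.
    change (Cmod (sum_n (fun k => z ^ k * c k) n)%C <= M)%R in HM.
    set (s := sum_n (fun k => z ^ k * c k) n) in *.
    assert (T := Cmod_triangle (s + z ^ S n * c (S n)) (- s)).
    replace (s + z ^ S n * c (S n) + - s) with (z ^ S n * c (S n)) in T by ring.
    rewrite Cmod_opp in T. lra.
Qed.

Lemma Csum_diff (f : nat -> C) N n : (N <= n)%nat ->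
  sum_n f n - sum_n f N = sum_n_m f (S N) n.
Proof. intros H. symmetry. apply (sum_n_m_sum_n f). auto. Qed.

Lemma tail (c : ps) z v rho r B N : (0 < rho)%R -> (0 <= r < rho)%R -> (Cmod z <= r)%R ->
  (forall n, Cmod (c n) * rho ^ n <= B)%R -> is_pseries c z v ->
  (Cmod (v - psum c z N) <= B * (r / rho) ^ (S N) / (1 - r / rho))%R.
Proof.
  intros Hrho Hr Hz HB Hv.
  assert (Ht : (0 <= r / rho < 1)%R).
  { split. apply Rdiv_le_0_compat; lra. apply Rmult_lt_reg_r with rho; auto.
    unfold Rdiv. rewrite Rmult_assoc, Rinv_l by lra. lra. }
  assert (HB0 : (0 <= B)%R).
  { specialize (HB 0%nat). simpl in HB. assert (T := Cmod_ge_0 (c 0%nat)). lra. }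
  apply (lim_le _ _ _ _ N Hv). intros n Hn.
  change (sum_n (fun k => scal (pow_n z k) (c k)) n) with (psum c z n).
  unfold psum.
  rewrite Csum_diff by auto.
  eapply Rle_trans. exact (norm_sum_n_m (V:=C_NormedModule) (fun k => z ^ k * c k) (S N) n).
  eapply Rle_trans. apply sum_n_m_le with (b := fun k => (B * (r / rho) ^ k)%R).
  { intros k. change (norm (z ^ k * c k)) with (Cmod (z ^ k * c k)).
    rewrite Cmod_mult, Cmod_pow.
    replace (B * (r / rho) ^ k)%R with (B * (r ^ k / rho ^ k))%R
      by (unfold Rdiv; rewrite Rpow_mult_distr, pow_inv; reflexivity).
    apply Rle_trans with (Cmod (c k) * r ^ k)%R.
    { rewrite Rmult_comm. apply Rmult_le_compat_l. apply Cmod_ge_0.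
      apply pow_incr. split; auto. apply Cmod_ge_0. }
    specialize (HB k).
    assert (Hp : (0 < rho ^ k)%R) by (apply pow_lt; auto).
    apply Rmult_le_reg_r with (rho ^ k)%R; auto.
    replace (B * (r ^ k / rho ^ k) * rho ^ k)%R with (B * r ^ k)%R by (field; lra).
    replace (Cmod (c k) * r ^ k * rho ^ k)%R with (Cmod (c k) * rho ^ k * r ^ k)%R by ring.
    apply Rmult_le_compat_r. apply pow_le; lra. auto. }
  rewrite (sum_n_m_mult_l (K:=R_Ring) B (fun k => (r/rho)^k)%R). change (mult B ?x) with (B * x)%R.
  unfold Rdiv. rewrite Rmult_assoc. apply Rmult_le_compat_l; auto.
  apply geom_le; auto.
Qed.

Fixpoint csum (f : nat -> C) (n : nat) : C :=
  match n with O => f O | S m => csum f m + f (S m) end.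
Fixpoint rsum (f : nat -> R) (n : nat) : R :=
  match n with O => f O | S m => (rsum f m + f (S m))%R end.

Lemma csum_ext (f g : nat -> C) n : (forall k, (k <= n)%nat -> f k = g k) -> csum f n = csum g n.
Proof. induction n; intros H; simpl. apply H; lia. rewrite IHn, H by (auto; lia). reflexivity. Qed.
Lemma rsum_ext f g n : (forall k, (k <= n)%nat -> f k = g k) -> rsum f n = rsum g n.
Proof. induction n; intros H; simpl. apply H; lia. rewrite IHn, H by (auto; lia). reflexivity. Qed.
Lemma rsum_le f g n : (forall k, (k <= n)%nat -> f k <= g k)%R -> (rsum f n <= rsum g n)%R.
Proof. induction n; intros H; simpl. apply H; lia. apply Rplus_le_compat. apply IHn; auto. apply H; lia. Qed.
Lemma rsum_nonneg f n : (forall k, (k <= n)%nat -> 0 <= f k)%R -> (0 <= rsum f n)%R.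
Proof. induction n; intros H; simpl. apply H; lia. apply Rplus_le_le_0_compat. apply IHn; auto. apply H; lia. Qed.
Lemma csum_plus (f g : nat -> C) n : csum (fun k => f k + g k) n = csum f n + csum g n.
Proof. induction n; simpl; auto. rewrite IHn. ring. Qed.
Lemma rsum_plus f g n : rsum (fun k => f k + g k)%R n = (rsum f n + rsum g n)%R.
Proof. induction n; simpl; auto. rewrite IHn. ring. Qed.
Lemma csum_scal_l (a : C) (f : nat -> C) n : a * csum f n = csum (fun k => a * f k) n.
Proof. induction n; simpl; auto. rewrite <- IHn. ring. Qed.
Lemma csum_scal_r (a : C) (f : nat -> C) n : csum f n * a = csum (fun k => f k * a) n.
Proof. induction n; simpl; auto. rewrite <- IHn. ring. Qed.
Lemma rsum_scal_l a f n : (a * rsum f n = rsum (fun k => a * f k) n)%R.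
Proof. induction n; simpl; auto. rewrite <- IHn. ring. Qed.
Lemma csum_conj (f : nat -> C) n : Cconj (csum f n) = csum (fun k => Cconj (f k)) n.
Proof. induction n; simpl; auto. rewrite Cplus_conj, IHn. reflexivity. Qed.
Lemma RtoC_rsum f n : RtoC (rsum f n) = csum (fun k => RtoC (f k)) n.
Proof. induction n; simpl; auto. rewrite RtoC_plus, IHn. reflexivity. Qed.
Lemma csum_swap (f : nat -> nat -> C) n m :
  csum (fun i => csum (fun j => f i j) m) n = csum (fun j => csum (fun i => f i j) n) m.
Proof.
  induction n; simpl. reflexivity.
  rewrite IHn. rewrite <- csum_plus. reflexivity.
Qed.
Lemma csum_mul (f g : nat -> C) n m : csum f n * csum g m = csum (fun i => csum (fun j => f i * g j) m) n.
Proof.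
  rewrite csum_scal_r. apply csum_ext. intros k _. rewrite csum_scal_l. reflexivity.
Qed.
Lemma csum_zero (f : nat -> C) n : (forall k, (k <= n)%nat -> f k = 0) -> csum f n = 0.
Proof. induction n; intros H; simpl. apply H; lia. rewrite IHn, H by (auto; lia). ring. Qed.
Lemma csum_delta (f : nat -> C) n i : (i <= n)%nat ->
  csum (fun k => if Nat.eq_dec k i then f k else 0) n = f i.
Proof.
  induction n; intros H; cbn [csum].
  - assert (i = 0%nat) by lia. subst. destruct (Nat.eq_dec 0 0); [reflexivity|lia].
  - destruct (Nat.eq_dec (S n) i).
    + subst. rewrite csum_zero. ring. intros k Hk. destruct (Nat.eq_dec k (S n)); [lia|reflexivity].
    + rewrite IHn by lia. ring.
Qed.
Lemma csum_const (c : C) n : csum (fun _ => c) n = RtoC (INR (S n)) * c.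
Proof.
  induction n; simpl csum. simpl. ring. rewrite IHn. rewrite (S_INR (S n)). rewrite RtoC_plus. ring.
Qed.
Lemma csum_geom (u : C) n : (u - 1) * csum (fun j => u ^ j) n = u ^ (S n) - 1.
Proof. induction n; simpl csum. simpl. ring. rewrite Cmult_plus_distr_l, IHn. simpl. ring. Qed.
Lemma Cmult_integral (x y : C) : x * y = 0 -> x = 0 \/ y = 0.
Proof.
  intros H. destruct (Ceq_dec x 0) as [Hx|Hx]; auto. right.
  replace y with (/ x * (x * y)) by (field; auto). rewrite H. ring.
Qed.

Lemma csum_geom0 (u : C) n : u ^ (S n) = 1 -> u <> 1 -> csum (fun j => u ^ j) n = 0.
Proof.
  intros H1 H2. assert (E := csum_geom u n). rewrite H1 in E.
  replace (1 - 1) with (RtoC 0) in E by ring.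
  apply Cmult_integral in E. destruct E as [E|E]; auto.
  exfalso. apply H2. replace u with ((u - 1) + 1) by ring. rewrite E. ring.
Qed.

Definition om (K : nat) : C := (cos (2 * PI / INR (S K)), sin (2 * PI / INR (S K))).

Lemma cis_pow (a : R) (k : nat) : ((cos a, sin a) : C) ^ k = ((cos (INR k * a), sin (INR k * a)) : C).
Proof.
  induction k.
  - simpl. rewrite Rmult_0_l, cos_0, sin_0. reflexivity.
  - rewrite Cpow_S, IHk. rewrite S_INR. unfold Cmult. simpl.
    rewrite Rmult_plus_distr_r, Rmult_1_l, cos_plus, sin_plus. f_equal; ring.
Qed.

Lemma INR_S_pos K : (0 < INR (S K))%R.
Proof. apply lt_0_INR. lia. Qed.

Lemma om_pow K k : om K ^ k = ((cos (INR k * (2 * PI / INR (S K))), sin (INR k * (2 * PI / INR (S K)))) : C).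
Proof. unfold om. apply cis_pow. Qed.

Lemma om_M K : om K ^ (S K) = 1.
Proof.
  rewrite om_pow. replace (INR (S K) * (2 * PI / INR (S K)))%R with (2 * PI)%R.
  rewrite cos_2PI, sin_2PI. reflexivity.
  field. apply Rgt_not_eq, INR_S_pos.
Qed.

Lemma cos_lt_1 x : (0 < x < 2 * PI)%R -> (cos x < 1)%R.
Proof.
  intros H. replace x with (2 * (x / 2))%R by field. rewrite cos_2a_sin.
  assert (0 < sin (x / 2))%R by (apply sin_gt_0; lra).
  assert (0 < sin (x / 2) * sin (x / 2))%R by (apply Rmult_lt_0_compat; auto). lra.
Qed.

Lemma om_ne1 K k : (0 < k < S K)%nat -> om K ^ k <> 1.
Proof.
  intros Hk E. rewrite om_pow in E. apply (f_equal fst) in E. cbn [fst] in E. change (fst (RtoC 1)) with 1%R in E.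
  assert (Hc : (cos (INR k * (2 * PI / INR (S K))) < 1)%R).
  { apply cos_lt_1. assert (HP := PI_RGT_0). assert (HS := INR_S_pos K).
    assert (0 < INR k)%R by (apply lt_0_INR; lia).
    assert (INR k < INR (S K))%R by (apply lt_INR; lia).
    split.
    - apply Rmult_lt_0_compat; auto. apply Rdiv_lt_0_compat; lra.
    - apply Rmult_lt_reg_r with (INR (S K)); auto.
      replace (INR k * (2 * PI / INR (S K)) * INR (S K))%R with (INR k * (2 * PI))%R by (field; lra).
      nra. }
  lra.
Qed.

Lemma Cconj_R (x : R) : Cconj (RtoC x) = RtoC x.
Proof. unfold Cconj, RtoC. simpl. f_equal. lra. Qed.

Lemma Cmod_cis a : Cmod ((cos a, sin a) : C) = 1%R.
Proof.
  unfold Cmod. cbn [fst snd]. rewrite <- sqrt_1. f_equal.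
  rewrite <- (sin2_cos2 a). unfold Rsqr. ring.
Qed.

Lemma Cmod_om_pow K k : Cmod (om K ^ k) = 1%R.
Proof. rewrite om_pow. apply Cmod_cis. Qed.

Lemma om_unit K k : om K ^ k * Cconj (om K ^ k) = 1.
Proof.
  rewrite <- Cmod2_conj. rewrite Cmod_om_pow. rewrite pow1. reflexivity.
Qed.

Lemma om_pow_nz K k : om K ^ k <> 0.
Proof. intro H. assert (T := Cmod_om_pow K k). rewrite H, Cmod_0 in T. lra. Qed.

Lemma om_inj K n m : (n < m <= K)%nat -> om K ^ n <> om K ^ m.
Proof.
  intros H E. replace m with (n + (m - n))%nat in E by lia.
  rewrite Cpow_add_r in E.
  assert (E2 : om K ^ n * (om K ^ (m - n) - 1) = 0).
  { replace (om K ^ n * (om K ^ (m - n) - 1)) with (om K ^ n * om K ^ (m - n) - om K ^ n) by ring. rewrite <- E. ring. }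
  apply Cmult_integral in E2. destruct E2 as [E2|E2].
  - apply (om_pow_nz K n E2).
  - apply (om_ne1 K (m - n)). lia. replace (om K ^ (m - n)) with (om K ^ (m - n) - 1 + 1) by ring.
    rewrite E2. ring.
Qed.

Lemma orth K n m : (n <= K)%nat -> (m <= K)%nat ->
  csum (fun j => (om K ^ n * Cconj (om K ^ m)) ^ j) K =
  if Nat.eq_dec m n then RtoC (INR (S K)) else 0.
Proof.
  intros Hn Hm. destruct (Nat.eq_dec m n) as [->|Hne].
  - rewrite om_unit. rewrite (csum_ext _ (fun _ => 1)). rewrite csum_const. ring.
    intros. apply Cpow_1_l.
  - apply csum_geom0.
    + rewrite Cpow_mult_l, <- Cpow_conj, <- !Cpow_mult_r.
      rewrite (Nat.mul_comm n), (Nat.mul_comm m), !Cpow_mult_r, om_M, !Cpow_1_l.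
      unfold Cconj. cbn [fst snd]. unfold Cmult. cbn [fst snd]. apply injective_projections; cbn; ring.
    + intro E. 
      assert (E2 : om K ^ n = om K ^ m).
      { replace (om K ^ n) with (om K ^ n * (Cconj (om K ^ m) * om K ^ m)).
        rewrite Cmult_assoc, E. ring.
        rewrite Cmult_comm with (x := Cconj _). rewrite om_unit. ring. }
      destruct (Nat.lt_total n m) as [Hl|[Hl|Hl]].
      * apply (om_inj K n m); [lia|auto].
      * lia.
      * apply (om_inj K m n); [lia|auto].
Qed.

Lemma pow_swap (a : C) j n : (a ^ j) ^ n = (a ^ n) ^ j.
Proof. rewrite <- !Cpow_mult_r. rewrite Nat.mul_comm. reflexivity. Qed.

Lemma parseval K (p : nat -> C) (r : R) :
  rsum (fun j => Cmod (csum (fun n => p n * (RtoC r * om K ^ j) ^ n) K)%C ^ 2)%R K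
  = (INR (S K) * rsum (fun n => Cmod (p n) ^ 2 * r ^ (n + n)) K)%R.
Proof.
  apply RtoC_inj. rewrite RtoC_mult, !RtoC_rsum.
  transitivity (csum (fun j => csum (fun n => csum (fun m =>
     (p n * Cconj (p m) * RtoC r ^ n * RtoC r ^ m) * (om K ^ n * Cconj (om K ^ m)) ^ j) K) K) K).
  { apply csum_ext. intros j _. rewrite Cmod2_conj. rewrite csum_conj. rewrite csum_mul.
    apply csum_ext; intros n _. apply csum_ext; intros m _.
    rewrite Cmult_conj, Cpow_conj, Cmult_conj, Cconj_R.
    rewrite !Cpow_mult_l. rewrite (pow_swap (om K) j n).
    rewrite <- Cpow_conj. rewrite (pow_swap (om K) j m). rewrite Cpow_conj. rewrite <- (Cpow_conj (om K ^ m)). ring. }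
  rewrite csum_swap, csum_scal_l. apply csum_ext. intros n Hn.
  rewrite csum_swap.
  rewrite (csum_ext _ (fun m => if Nat.eq_dec m n then
      (p n * Cconj (p m) * RtoC r ^ n * RtoC r ^ m) * RtoC (INR (S K)) else 0)).
  - rewrite csum_delta by auto. rewrite RtoC_mult, pow_add, RtoC_mult, Cmod2_conj, !RtoC_pow. ring.

  - intros m Hm. rewrite <- csum_scal_l. rewrite orth by auto.
    destruct (Nat.eq_dec m n); ring.
Qed.

Lemma csum_sum_n (f : nat -> C) n : csum f n = sum_n f n.
Proof. induction n; simpl. rewrite sum_O. reflexivity. rewrite sum_Sn, <- IHn. reflexivity. Qed.

Lemma csum_shift (f : nat -> C) n : csum f (S n) = f 0%nat + csum (fun k => f (S k)) n.
Proof. induction n. reflexivity.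
  change (csum f (S (S n))) with (csum f (S n) + f (S (S n))). rewrite IHn.
  change (csum (fun k => f (S k)) (S n)) with (csum (fun k => f (S k)) n + f (S (S n))). ring. Qed.

Lemma rsum_ge12 (f : nat -> R) K : (forall k, (k <= K)%nat -> 0 <= f k)%R -> (2 <= K)%nat ->
  (f 1%nat + f 2%nat <= rsum f K)%R.
Proof.
  intros H HK. induction HK.
  - simpl. assert (0 <= f 0%nat)%R by (apply H; lia). lra.
  - simpl. assert (0 <= f (S m))%R by (apply H; lia). assert (f 1%nat + f 2%nat <= rsum f m)%R.
    { apply IHHK. intros; apply H; lia. } lra.
Qed.

Lemma disk_bound (c : ps) rho : analytic_disk c -> (0 <= rho < 1)%R ->
  exists B, forall n, (Cmod (c n) * rho ^ n <= B)%R.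
Proof.
  intros Ha Hr. destruct (coef_bound c (RtoC rho)) as [B HB].
  { apply Ha. unfold inDisk. rewrite Cmod_R, Rabs_pos_eq; lra. }
  exists B. intros n. specialize (HB n). rewrite Cmod_R, Rabs_pos_eq in HB by lra. auto.
Qed.

Definition tr (h : ps) (N : nat) : ps := fun n => if le_dec n N then h n else 0.

Lemma tr_sum (h : ps) N z : csum (fun n => tr h N n * z ^ n) (S N) = psum h z N.
Proof.
  unfold psum. rewrite <- csum_sum_n. simpl csum.
  unfold tr at 2. destruct (le_dec (S N) N); [lia|]. rewrite Cmult_0_l, Cplus_0_r.
  apply csum_ext. intros k Hk. unfold tr. destruct (le_dec k N); [|lia]. ring.
Qed.

Lemma sq_le (a b : R) : (0 <= a <= b)%R -> (a ^ 2 <= b ^ 2)%R.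
Proof. intros. nra. Qed.

Lemma eps_lim (X Y : R) : (0 <= Y)%R -> (forall eps, 0 < eps -> X <= (1 + eps) ^ 2 * Y)%R -> (X <= Y)%R.
Proof.
  intros HY H. apply Rnot_lt_le. intro HXY.
  set (e := Rmin 1 ((X - Y) / (3 * (Y + 1)))).
  assert (He : (0 < e)%R). { unfold e. apply Rmin_glb_lt. lra. apply Rdiv_lt_0_compat; lra. }
  assert (He1 : (e <= 1)%R) by apply Rmin_l.
  assert (He2 : (e <= (X - Y) / (3 * (Y + 1)))%R) by apply Rmin_r.
  specialize (H e He).
  assert (e * (3 * (Y + 1)) <= X - Y)%R.
  { apply Rmult_le_reg_r with (/ (3 * (Y + 1)))%R. apply Rinv_0_lt_compat; lra.
    rewrite Rmult_assoc, Rinv_r by lra. lra. }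
  nra.
Qed.

Definition gco (h : ps) (N : nat) (b : C) : ps :=
  fun n => tr h N n + b * (match n with O => 0 | S k => tr h N k end).

Lemma gco_sum h N b z :
  csum (fun n => gco h N b n * z ^ n) (S N) = psum h z N * (1 + b * z).
Proof.
  unfold gco. rewrite (csum_ext _ (fun n => tr h N n * z ^ n +
     (b * match n with O => 0 | S k => tr h N k end) * z ^ n)) by (intros; ring).
  rewrite csum_plus, tr_sum, csum_shift.
  rewrite (csum_ext _ (fun k => (b * z) * (tr h N k * z ^ k))) by (intros; simpl; ring).
  rewrite <- csum_scal_l.
  replace (csum (fun k => tr h N k * z ^ k) N) with (psum h z N).
  ring.
  unfold psum. rewrite <- csum_sum_n. apply csum_ext. intros k Hk. unfold tr.
  destruct (le_dec k N); [ring|lia].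
Qed.

Definition qco (b : C) : ps := fun n => match n with O => 1 | 1%nat => b | _ => 0 end.

Lemma qco_sum b z K : (1 <= K)%nat -> csum (fun n => qco b n * z ^ n) K = 1 + b * z.
Proof.
  intros HK. destruct K as [|K]; [lia|]. rewrite csum_shift.
  destruct K as [|K].
  - simpl. ring.
  - rewrite csum_shift. rewrite csum_zero. simpl. ring.
    intros k _. simpl. ring.
Qed.

Lemma rsum_shift (f : nat -> R) n : rsum f (S n) = (f 0%nat + rsum (fun k => f (S k)) n)%R.
Proof. induction n. reflexivity.
  change (rsum f (S (S n))) with (rsum f (S n) + f (S (S n)))%R. rewrite IHn.
  change (rsum (fun k => f (S k)) (S n)) with (rsum (fun k => f (S k)) n + f (S (S n)))%R. ring. Qed.

Lemma rsum_zero (f : nat -> R) n : (forall k, (k <= n)%nat -> f k = 0%R) -> rsum f n = 0%R.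
Proof. induction n; intros H; simpl. apply H; lia. rewrite IHn, H by (auto; lia). ring. Qed.

Lemma qco_rsum b r K : (1 <= K)%nat ->
  rsum (fun n => Cmod (qco b n) ^ 2 * r ^ (n + n))%R K = (1 + Cmod b ^ 2 * r ^ 2)%R.
Proof.
  intros HK. destruct K as [|K]; [lia|]. rewrite rsum_shift.
  destruct K as [|K].
  - simpl. rewrite Cmod_1. ring.
  - rewrite rsum_shift. rewrite rsum_zero. simpl. rewrite Cmod_1. ring.
    intros k _. simpl. rewrite Cmod_0. ring.
Qed.

Lemma key (h : ps) : analytic_disk h -> h 0%nat = 0 ->
  (forall z v, inDisk z -> is_pseries h z v -> inDisk v) ->
  forall (b : C) (r : R), (0 < r < 1)%R ->
  (Cmod (h 1%nat) ^ 2 * r ^ 2 + Cmod (h 2%nat + b * h 1%nat) ^ 2 * r ^ 4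
     <= 1 + Cmod b ^ 2 * r ^ 2)%R.
Proof.
  intros Ha H0 Hd b r Hr.
  set (rho := ((1 + r) / 2)%R).
  destruct (disk_bound h rho Ha) as [B HB]. { unfold rho; lra. }
  assert (HB0 : (0 <= B)%R). { specialize (HB 0%nat). simpl in HB. assert (T := Cmod_ge_0 (h 0%nat)). lra. }
  set (t := (r / rho)%R).
  assert (Ht : (0 <= t < 1)%R).
  { unfold t, rho. split. apply Rdiv_le_0_compat; lra.
    apply Rmult_lt_reg_r with ((1 + r) / 2)%R. lra. unfold Rdiv. field_simplify; lra. }
  apply eps_lim. { assert (T := pow2_ge_0 (Cmod b)). assert (0 <= r ^ 2)%R by apply pow2_ge_0. nra. }
  intros eps Heps.
  destruct (pow_lt_1_zero t ltac:(rewrite Rabs_pos_eq; lra) (eps * (1 - t) / (B + 1))%R)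
    as [N0 HN0].
  { apply Rdiv_lt_0_compat; [apply Rmult_lt_0_compat|]; lra. }
  set (N := (N0 + 2)%nat). set (K := S N).
  assert (Htail : (B * t ^ S N / (1 - t) <= eps)%R).
  { specialize (HN0 (S N) ltac:(unfold N; lia)). rewrite Rabs_pos_eq in HN0 by (apply pow_le; lra).
    assert (0 <= t ^ S N)%R by (apply pow_le; lra).
    apply Rle_trans with ((B + 1) * t ^ S N / (1 - t))%R.
    { unfold Rdiv. apply Rmult_le_compat_r. apply Rlt_le, Rinv_0_lt_compat; lra. nra. }
    apply Rmult_le_reg_r with ((1 - t) / (B + 1))%R. apply Rdiv_lt_0_compat; lra.
    replace ((B + 1) * t ^ S N / (1 - t) * ((1 - t) / (B + 1)))%R with (t ^ S N)%R by (field; lra).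
    replace (eps * ((1 - t) / (B + 1)))%R with (eps * (1 - t) / (B + 1))%R by (field; lra). lra. }
  assert (Hpt : forall j, (Cmod (psum h (RtoC r * om K ^ j) N) <= 1 + eps)%R).
  { intros j. set (z := RtoC r * om K ^ j).
    assert (Hz : Cmod z = r). { unfold z. rewrite Cmod_mult, Cmod_om_pow, Cmod_R, Rabs_pos_eq; lra. }
    destruct (Ha z) as [v Hv]. { unfold inDisk. lra. }
    assert (Hv1 := Hd z v ltac:(unfold inDisk; lra) Hv). unfold inDisk in Hv1.
    assert (T := tail h z v rho r B N ltac:(unfold rho; lra) ltac:(unfold rho; lra) ltac:(lra) HB Hv).
    fold t in T.
    assert (T2 := Cmod_triangle v (psum h z N - v)).
    replace (v + (psum h z N - v)) with (psum h z N) in T2 by ring.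
    rewrite Cmod_sub_sym in T2. lra. }
  assert (HP := parseval K (gco h N b) r).
  assert (HQ := parseval K (qco b) r).
  rewrite qco_rsum in HQ by (unfold K; lia).
  assert (HL : (rsum (fun j => Cmod (csum (fun n => gco h N b n * (RtoC r * om K ^ j) ^ n) K)%C ^ 2) K <=
     (1 + eps) ^ 2 * rsum (fun j => Cmod (csum (fun n => qco b n * (RtoC r * om K ^ j) ^ n) K)%C ^ 2) K)%R).
  { rewrite rsum_scal_l. apply rsum_le. intros j _.
    unfold K. rewrite gco_sum, qco_sum by lia. rewrite Cmod_mult.
    rewrite Rpow_mult_distr. apply Rmult_le_compat_r. apply pow2_ge_0.
    apply sq_le. split. apply Cmod_ge_0. apply Hpt. }
  rewrite HP, HQ in HL.
  assert (HG := rsum_ge12 (fun n => Cmod (gco h N b n) ^ 2 * r ^ (n + n))%R K).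
  cbv beta in HG. change (1+1)%nat with 2%nat in HG. change (2+2)%nat with 4%nat in HG.
  assert (E1 : gco h N b 1%nat = h 1%nat).
  { unfold gco, tr. destruct (le_dec 1 N); [|unfold N in *; lia]. destruct (le_dec 0 N); [|lia].
    rewrite H0. ring. }
  assert (E2 : gco h N b 2%nat = h 2%nat + b * h 1%nat).
  { unfold gco, tr. destruct (le_dec 2 N); [|unfold N in *; lia]. destruct (le_dec 1 N); [|lia]. ring. }
  rewrite E1, E2 in HG.
  assert (HK : (0 < INR (S K))%R) by apply INR_S_pos.
  assert (HG' : (Cmod (h 1%nat) ^ 2 * r ^ 2 + Cmod (h 2%nat + b * h 1%nat)%C ^ 2 * r ^ 4
     <= rsum (fun n => Cmod (gco h N b n) ^ 2 * r ^ (n + n)) K)%R).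
  { apply HG. intros k _. apply Rmult_le_pos. apply pow2_ge_0. apply pow_le; lra. unfold K, N; lia. }
  apply Rmult_le_reg_l with (INR (S K)); auto.
  set (S0 := rsum (fun n => Cmod (gco h N b n) ^ 2 * r ^ (n + n))%R K) in *.
  set (X := (Cmod (h 1%nat) ^ 2 * r ^ 2 + Cmod (h 2%nat + b * h 1%nat)%C ^ 2 * r ^ 4)%R) in *.
  set (Y := (1 + Cmod b ^ 2 * r ^ 2)%R) in *.
  nra.
Qed.

Lemma r_to_1 (W Y : R) : (0 <= Y)%R -> (forall r, 0 < r < 1 -> W * r ^ 4 <= Y)%R -> (W <= Y)%R.
Proof.
  intros HY H. apply Rnot_lt_le. intro HW.
  assert (HW0 : (0 < W)%R) by lra.
  set (d := Rmin (1/2) ((W - Y) / (8 * W))).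
  assert (Hd : (0 < d)%R). { unfold d. apply Rmin_glb_lt. lra. apply Rdiv_lt_0_compat; lra. }
  assert (Hd1 : (d <= 1/2)%R) by apply Rmin_l.
  assert (Hd2 : (d <= (W - Y) / (8 * W))%R) by apply Rmin_r.
  assert (Hd3 : (d * (8 * W) <= W - Y)%R).
  { apply Rmult_le_reg_r with (/ (8 * W))%R. apply Rinv_0_lt_compat; lra.
    rewrite Rmult_assoc, Rinv_r by lra. lra. }
  specialize (H (1 - d)%R ltac:(lra)).
  assert (HB : (1 - 4 * d <= (1 - d) ^ 4)%R).
  { assert (0 <= d * d * (6 - 4 * d + d * d))%R.
    { apply Rmult_le_pos. nra. nra. } nra. }
  nra.
Qed.

Lemma schur (h : ps) : analytic_disk h -> h 0%nat = 0 ->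
  (forall z v, inDisk z -> is_pseries h z v -> inDisk v) ->
  (Cmod (h 1%nat) <= 1)%R /\ (Cmod (h 2%nat) <= 1 - Cmod (h 1%nat) ^ 2)%R.
Proof.
  intros Ha H0 Hd.
  assert (K1 : forall b, (Cmod (h 1%nat) ^ 2 + Cmod (h 2%nat + b * h 1%nat)%C ^ 2 <= 1 + Cmod b ^ 2)%R).
  { intros b. apply r_to_1. assert (T := pow2_ge_0 (Cmod b)). lra.
    intros r Hr. assert (T := key h Ha H0 Hd b r Hr).
    assert (Hr2 : (r ^ 4 <= r ^ 2)%R).
    { replace (r ^ 4)%R with (r ^ 2 * r ^ 2)%R by ring.
      assert (0 <= r ^ 2 <= 1)%R. { split. apply pow2_ge_0. replace 1%R with (1 ^ 2)%R by ring.
        apply sq_le. lra. }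
      nra. }
    assert (0 <= r ^ 2 <= 1)%R. { split. apply pow2_ge_0. replace 1%R with (1 ^ 2)%R by ring.
        apply sq_le. lra. }
    assert (T1 := pow2_ge_0 (Cmod (h 1%nat))). assert (T2 := pow2_ge_0 (Cmod (h 2%nat + b * h 1%nat))).
    assert (T3 := pow2_ge_0 (Cmod b)).
    nra. }
  set (a := Cmod (h 1%nat)) in *. set (c := Cmod (h 2%nat)).
  assert (Ha0 : (0 <= a)%R) by apply Cmod_ge_0.
  assert (Hc0 : (0 <= c)%R) by apply Cmod_ge_0.
  assert (K0 := K1 0). rewrite Cmult_0_l, Cplus_0_r, Cmod_0 in K0. fold c in K0.
  assert (Ha1 : (a <= 1)%R). { assert (T := pow2_ge_0 c). nra. }
  split; auto.
  destruct (Req_dec a 1) as [Ea|Ea].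
  - rewrite Ea in K0. assert (c = 0)%R by nra. rewrite Ea. lra.
  - assert (HD : (0 < 1 - a ^ 2)%R) by nra.
    set (D := (1 - a ^ 2)%R) in *.
    set (b := Cconj (h 1%nat) * h 2%nat / RtoC D).
    assert (HDc : RtoC D <> 0). { intro HH. apply RtoC_inj in HH. lra. }
    assert (E : h 1%nat * Cconj (h 1%nat) = RtoC (a ^ 2)). { unfold a. rewrite Cmod2_conj. reflexivity. }
    assert (Eb : h 2%nat + b * h 1%nat = h 2%nat * RtoC (/ D)).
    { unfold b. rewrite RtoC_inv by lra.
      replace (h 2%nat + Cconj (h 1%nat) * h 2%nat / D * h 1%nat) with
         (h 2%nat * ((RtoC D + h 1%nat * Cconj (h 1%nat)) / RtoC D)) by (field; auto).
      rewrite E. unfold D. rewrite RtoC_minus. field. intro HH. apply HDc. unfold D. rewrite RtoC_minus. exact HH. }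
    specialize (K1 b). rewrite Eb in K1.
    assert (Cb : Cmod b = (a * c / D)%R).
    { unfold b. rewrite Cmod_div by auto. rewrite Cmod_mult, Cmod_conj, Cmod_R, Rabs_pos_eq by lra. reflexivity. }
    rewrite Cb, Cmod_mult, Cmod_R, Rabs_pos_eq in K1 by (apply Rlt_le, Rinv_0_lt_compat; lra).
    fold c in K1.
    assert (HH : (c ^ 2 <= D ^ 2)%R).
    { replace (c * / D)%R with (c / D)%R in K1 by reflexivity.
      assert (E2 : (a ^ 2 + (c / D) ^ 2 - (1 + (a * c / D) ^ 2) = (D ^ 2 - c ^ 2) * (- D) / D ^ 2)%R).
      { unfold D. field. fold D. lra. }
      assert (0 < D ^ 2)%R by nra.
      assert (((D ^ 2 - c ^ 2) * (- D) / D ^ 2) <= 0)%R by lra.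
      unfold Rdiv in H1. 
      assert (0 < / D ^ 2)%R by (apply Rinv_0_lt_compat; lra).
      set (P := (D ^ 2 - c ^ 2)%R) in *.
      assert (P * - D <= 0)%R.
      { apply Rmult_le_reg_r with (/ D ^ 2)%R; auto. lra. }
      assert (0 <= P)%R by nra. unfold P in *. lra. }
    nra.
Qed.

Lemma psum3 (c : ps) z : psum c z 3 = c 0%nat + c 1%nat * z + c 2%nat * z ^ 2 + c 3%nat * z ^ 3.
Proof. unfold psum. rewrite !sum_Sn, sum_O. simpl. change plus with Cplus. ring. Qed.

Lemma val0 (c : ps) (v : C) : analytic_disk c -> is_pseries c (RtoC 0) v -> v = c 0%nat.
Proof.
  intros Ha Hv. destruct (disk_bound c (1/2) Ha) as [B HB]. lra.
  assert (T := tail c 0 v (1/2) 0 B 0 ltac:(lra) ltac:(lra) ltac:(rewrite Cmod_0; lra) HB Hv).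
  rewrite Rdiv_0_l, pow_ne_zero in T by lia. rewrite Rmult_0_r, Rdiv_0_l in T.
  assert (Cmod (v - psum c 0 0) = 0)%R by (assert (TT := Cmod_ge_0 (v - psum c 0 0)); lra).
  apply Cmod_eq_0 in H. unfold psum in H. rewrite sum_O in H. simpl in H.
  replace v with (v - (1 * c 0%nat) + 1 * c 0%nat) by ring. rewrite H. ring.
Qed.

Lemma tail4 (c : ps) : analytic_disk c -> exists K, (0 <= K)%R /\ forall z v, (Cmod z <= 1/4)%R ->
  is_pseries c z v ->
  (Cmod (v - (c 0%nat + c 1%nat * z + c 2%nat * z ^ 2 + c 3%nat * z ^ 3)) <= K * Cmod z ^ 4)%R.
Proof.
  intros Ha. destruct (disk_bound c (1/2) Ha) as [B HB]. lra.
  assert (HB0 : (0 <= B)%R). { specialize (HB 0%nat). simpl in HB. assert (T := Cmod_ge_0 (c 0%nat)). lra. }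
  exists (32 * B)%R. split. lra. intros z v Hz Hv.
  assert (T := tail c z v (1/2) (Cmod z) B 3 ltac:(lra) ltac:(split; [apply Cmod_ge_0|lra]) (Rle_refl _) HB Hv).
  rewrite psum3 in T. eapply Rle_trans. apply T.
  set (r := Cmod z) in *. assert (0 <= r)%R by apply Cmod_ge_0.
  replace (r / (1/2))%R with (2 * r)%R by field.
  apply Rmult_le_reg_r with (1 - 2 * r)%R. lra.
  replace (B * (2 * r) ^ 4 / (1 - 2 * r) * (1 - 2 * r))%R with (B * 16 * r ^ 4)%R by (field; lra).
  assert (0 <= r ^ 4)%R by (apply pow_le; lra).
  assert (0 <= B * r ^ 4)%R by (apply Rmult_le_pos; lra).
  assert (0 <= (B * r ^ 4) * (1/2 - 2 * r))%R by (apply Rmult_le_pos; lra).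
  nra.
Qed.

Lemma Cmod_le_plus (x y : C) : (Cmod x <= Cmod (x + y) + Cmod y)%R.
Proof.
  assert (T := Cmod_triangle (x + y) (- y)). replace (x + y + - y) with x in T by ring.
  rewrite Cmod_opp in T. exact T.
Qed.

Lemma zero_lim (c : C) (A d : R) : (0 < d)%R -> (forall t, 0 < t < d -> Cmod c <= A * t)%R -> c = 0.
Proof.
  intros Hd H. apply Cmod_eq_0. apply Rle_antisym; [|apply Cmod_ge_0].
  apply Rnot_lt_le. intro Hc.
  set (t := Rmin (d / 2) (Cmod c / (2 * (Rabs A + 1)))).
  assert (Ht : (0 < t)%R). { unfold t. apply Rmin_glb_lt. lra. apply Rdiv_lt_0_compat. lra.
    assert (T := Rabs_pos A). lra. }
  assert (Ht1 : (t <= d / 2)%R) by apply Rmin_l.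
  assert (Ht2 : (t <= Cmod c / (2 * (Rabs A + 1)))%R) by apply Rmin_r.
  specialize (H t ltac:(lra)).
  assert (T := Rabs_pos A). assert (T2 := Rle_abs A).
  assert (t * (2 * (Rabs A + 1)) <= Cmod c)%R.
  { apply Rmult_le_reg_r with (/ (2 * (Rabs A + 1)))%R. apply Rinv_0_lt_compat; lra.
    rewrite Rmult_assoc, Rinv_r by lra. lra. }
  nra.
Qed.

Lemma uniq3 (c1 c2 c3 : C) (K d : R) : (0 < d)%R ->
  (forall t, 0 < t < d -> Cmod (c1 * RtoC t + c2 * RtoC t ^ 2 + c3 * RtoC t ^ 3) <= K * t ^ 4)%R ->
  c1 = 0 /\ c2 = 0 /\ c3 = 0.
Proof.
  intros Hd H.
  set (d' := Rmin d 1).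
  assert (Hd' : (0 < d')%R) by (unfold d'; apply Rmin_glb_lt; lra).
  assert (Hd1 : (d' <= d)%R) by apply Rmin_l. assert (Hd2 : (d' <= 1)%R) by apply Rmin_r.
  assert (E1 : c1 = 0).
  { apply (zero_lim c1 (K + Cmod c2 + Cmod c3) d' Hd'). intros t Ht.
    specialize (H t ltac:(lra)).
    assert (T := Cmod_le_plus (c1 * RtoC t) (c2 * RtoC t ^ 2 + c3 * RtoC t ^ 3)).
    rewrite Cplus_assoc in T.
    assert (T2 := Cmod_triangle (c2 * RtoC t ^ 2) (c3 * RtoC t ^ 3)).
    rewrite ?Cmod_mult, ?Cmod_pow, ?Cmod_R, ?Rabs_pos_eq in T by lra.
    rewrite ?Cmod_mult, ?Cmod_pow, ?Cmod_R, ?Rabs_pos_eq in T2 by lra.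
    assert (0 <= Cmod c2)%R by apply Cmod_ge_0. assert (0 <= Cmod c3)%R by apply Cmod_ge_0.
    assert (0 <= Cmod c1)%R by apply Cmod_ge_0.
    assert (Cmod c1 * t <= (K + Cmod c2 + Cmod c3) * t * t)%R.
    { assert (0 <= t * t <= 1)%R by (split; nra).
      assert (t ^ 4 <= t ^ 2)%R by (replace (t ^ 4)%R with ((t * t) * (t * t))%R by ring;
        replace (t ^ 2)%R with (t * t)%R by ring; nra).
      assert (t ^ 3 <= t ^ 2)%R by (replace (t ^ 3)%R with ((t * t) * t)%R by ring;
        replace (t ^ 2)%R with (t * t)%R by ring; nra).
      assert (0 <= K)%R. { assert (T3 := Cmod_ge_0 (c1 * RtoC t + c2 * RtoC t ^ 2 + c3 * RtoC t ^ 3)).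
        assert (0 < t ^ 4)%R by (apply pow_lt; lra). nra. }
      simpl in *. nra. }
    apply Rmult_le_reg_r with t. lra. nra. }
  subst c1.
  assert (E2 : c2 = 0).
  { apply (zero_lim c2 (K + Cmod c3) d' Hd'). intros t Ht.
    specialize (H t ltac:(lra)). rewrite Cmult_0_l, Cplus_0_l in H.
    assert (T := Cmod_le_plus (c2 * RtoC t ^ 2) (c3 * RtoC t ^ 3)).
    rewrite ?Cmod_mult, ?Cmod_pow, ?Cmod_R, ?Rabs_pos_eq in T by lra.
    assert (0 <= Cmod c2)%R by apply Cmod_ge_0. assert (0 <= Cmod c3)%R by apply Cmod_ge_0.
    assert (0 <= K)%R. { assert (T3 := Cmod_ge_0 (c2 * RtoC t ^ 2 + c3 * RtoC t ^ 3)).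
        assert (0 < t ^ 4)%R by (apply pow_lt; lra). nra. }
    assert (Hp : (t ^ 4 <= t ^ 3)%R).
    { replace (t ^ 4)%R with (t ^ 3 * t)%R by ring. assert (0 < t ^ 3)%R by (apply pow_lt; lra). nra. }
    assert (K * t ^ 4 <= K * t ^ 3)%R by (apply Rmult_le_compat_l; lra).
    apply Rmult_le_reg_r with (t ^ 2)%R. apply pow_lt; lra.
    replace ((K + Cmod c3) * t * t ^ 2)%R with (K * t ^ 3 + Cmod c3 * t ^ 3)%R by ring.
    lra. }
  subst c2. split; auto. split; auto.
  apply (zero_lim c3 K d' Hd'). intros t Ht.
  specialize (H t ltac:(lra)). rewrite !Cmult_0_l, !Cplus_0_l in H.
  rewrite Cmod_mult, Cmod_pow, Cmod_R, Rabs_pos_eq in H by lra.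
  assert (0 < t ^ 3)%R by (apply pow_lt; lra).
  apply Rmult_le_reg_r with (t ^ 3)%R. lra.
  replace (K * t * t ^ 3)%R with (K * t ^ 4)%R by ring. lra.
Qed.

Lemma pow_le1 t k : (0 <= t <= 1)%R -> (t ^ k <= 1)%R.
Proof. intros H. induction k; simpl. lra. assert (0 <= t ^ k)%R by (apply pow_le; lra). nra. Qed.

Lemma poly_bound (f : nat -> C) n t : (0 <= t <= 1)%R ->
  (Cmod (csum (fun k => f k * RtoC t ^ k) n)%C <= rsum (fun k => Cmod (f k)) n)%R.
Proof.
  intros Ht. induction n; simpl csum; simpl rsum.
  - rewrite Cmod_mult. simpl. rewrite Cmod_1. lra.
  - eapply Rle_trans. apply Cmod_triangle. apply Rplus_le_compat; auto.
    rewrite Cmod_mult, Cmod_mult, Cmod_pow, Cmod_R, Rabs_pos_eq by lra. change (t * t ^ n)%R with (t ^ S n)%R.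
    assert (t ^ S n <= 1)%R by (apply pow_le1; auto).
    assert (0 <= Cmod (f (S n)))%R by apply Cmod_ge_0. nra.
Qed.

Definition rr (a2 a3 b1 b2 b3 : C) (k : nat) : C :=
  match k with
  | O => a2 * (b2 ^ 2 + 2 * b1 * b3) + 3 * a3 * b1 ^ 2 * b2
  | 1%nat => 2 * a2 * b2 * b3 + a3 * (3 * b1 * b2 ^ 2 + 3 * b1 ^ 2 * b3)
  | 2%nat => a2 * b3 ^ 2 + a3 * (b2 ^ 3 + 6 * b1 * b2 * b3)
  | 3%nat => a3 * (3 * b2 ^ 2 * b3 + 3 * b1 * b3 ^ 2)
  | 4%nat => 3 * a3 * b2 * b3 ^ 2
  | 5%nat => a3 * b3 ^ 3
  | _ => 0
  end.

Lemma big_ident (a2 a3 b1 b2 b3 w v : C) :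
  let p := b1 * w + b2 * w ^ 2 + b3 * w ^ 3 in
  (b1 - 1) * w + (b2 + a2 * b1 ^ 2) * w ^ 2 + (b3 + 2 * a2 * b1 * b2 + a3 * b1 ^ 3) * w ^ 3 =
  - (w - (0 + 1 * v + a2 * v ^ 2 + a3 * v ^ 3))
  - (v - (0 + p)) * (1 + a2 * (v + p) + a3 * (v ^ 2 + v * p + p ^ 2))
  - w ^ 4 * csum (fun k => rr a2 a3 b1 b2 b3 k * w ^ k) 5.
Proof. intros p. unfold p. simpl csum. unfold rr. ring. Qed.

Lemma pow_le_t t k : (0 <= t <= 1)%R -> (1 <= k)%nat -> (t ^ k <= t)%R.
Proof.
  intros Ht Hk. destruct k. lia. simpl. assert (t ^ k <= 1)%R by (apply pow_le1; auto).
  assert (0 <= t ^ k)%R by (apply pow_le; lra). nra.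
Qed.

Lemma Cmod_tri3 (x y z : C) : (Cmod (x + y + z) <= Cmod x + Cmod y + Cmod z)%R.
Proof. eapply Rle_trans. apply Cmod_triangle. assert (T := Cmod_triangle x y). lra. Qed.

Lemma inv_coefs_thm (a b : ps) : in_Sigma a b ->
  b 0%nat = 0 /\ b 1%nat = 1 /\ b 2%nat = - a 2%nat /\ b 3%nat = 2 * a 2%nat ^ 2 - a 3%nat.
Proof.
  intros [Ha0 [Ha1 [[HaA HaU] [[HbA HbU] [r0 [Hr0 Hinv]]]]]].
  assert (Hb0 : b 0%nat = 0).
  { destruct (HbA (RtoC 0)) as [v Hv]. { unfold inDisk. rewrite Cmod_0. lra. }
    assert (Ev := val0 b v HbA Hv).
    destruct (Hinv (RtoC 0) v) as [Hvd Hva]; auto. rewrite Cmod_0. lra.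
    destruct (HaA (RtoC 0)) as [u Hu]. { unfold inDisk. rewrite Cmod_0. lra. }
    assert (Eu := val0 a u HaA Hu). rewrite Ha0 in Eu. subst u.
    rewrite <- Ev. apply (HaU v (RtoC 0) (RtoC 0)); auto. unfold inDisk. rewrite Cmod_0. lra. }
  destruct (tail4 a HaA) as [Ka [HKa HTa]].
  destruct (tail4 b HbA) as [Kb [HKb HTb]].
  set (b1 := b 1%nat). set (b2 := b 2%nat). set (b3 := b 3%nat).
  set (a2 := a 2%nat). set (a3 := a 3%nat).
  set (V := (Cmod b1 + Cmod b2 + Cmod b3 + Kb)%R).
  assert (HV : (0 <= V)%R).
  { unfold V. assert (T1 := Cmod_ge_0 b1). assert (T2 := Cmod_ge_0 b2). assert (T3 := Cmod_ge_0 b3). lra. }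
  set (d := Rmin (Rmin (1/4) (r0 / 2)) (1 / (4 * (V + 1)))).
  assert (Hd : (0 < d)%R).
  { unfold d. apply Rmin_glb_lt. apply Rmin_glb_lt; lra. apply Rdiv_lt_0_compat; lra. }
  assert (Hd1 : (d <= 1/4)%R) by (unfold d; eapply Rle_trans; [apply Rmin_l|apply Rmin_l]).
  assert (Hd2 : (d <= r0/2)%R) by (unfold d; eapply Rle_trans; [apply Rmin_l|apply Rmin_r]).
  assert (Hd3 : (d <= 1 / (4 * (V + 1)))%R) by (unfold d; apply Rmin_r).
  set (Qb := (1 + Cmod a2 * (2 * V) + Cmod a3 * (3 * V ^ 2))%R).
  set (RB := rsum (fun k => Cmod (rr a2 a3 b1 b2 b3 k)) 5).
  assert (Main : forall t, (0 < t < d)%R ->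
    (Cmod ((b1 - 1) * RtoC t + (b2 + a2 * b1 ^ 2) * RtoC t ^ 2 + (b3 + 2 * a2 * b1 * b2 + a3 * b1 ^ 3) * RtoC t ^ 3)%C
      <= (Ka * V ^ 4 + Kb * Qb + RB) * t ^ 4)%R).
  { intros t Ht. set (w := RtoC t).
    assert (Hw : Cmod w = t) by (unfold w; rewrite Cmod_R, Rabs_pos_eq; lra).
    destruct (HbA w) as [v Hv]. { unfold inDisk. lra. }
    destruct (Hinv w v) as [Hvd Hva]; auto. lra.
    assert (Tb := HTb w v ltac:(lra) Hv). rewrite Hw in Tb. rewrite Hb0 in Tb. fold b1 b2 b3 in Tb.
    set (p := b1 * w + b2 * w ^ 2 + b3 * w ^ 3).
    replace (0 + b1 * w + b2 * w ^ 2 + b3 * w ^ 3) with (0 + p) in Tb by (unfold p; ring).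
    assert (Hp : (Cmod p <= (Cmod b1 + Cmod b2 + Cmod b3) * t)%R).
    { unfold p. eapply Rle_trans. apply Cmod_tri3. rewrite !Cmod_mult, !Cmod_pow, Hw.
      assert (T1 := Cmod_ge_0 b1). assert (T2 := Cmod_ge_0 b2). assert (T3 := Cmod_ge_0 b3).
      assert (t ^ 2 <= t)%R by (apply pow_le_t; lia || lra). assert (t ^ 3 <= t)%R by (apply pow_le_t; lia || lra).
      nra. }
    assert (Hv' : (Cmod v <= V * t)%R).
    { assert (T := Cmod_le_plus v (- (0 + p))).
      replace (v + - (0 + p)) with (v - (0 + p)) in T by ring. rewrite Cmod_opp in T.
      replace (0 + p) with p in T by ring.
      assert (Tb' : (Cmod (v - p) <= Kb * t ^ 4)%R) by (replace (v - p) with (v - (0 + p)) by ring; exact Tb).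
      assert (t ^ 4 <= t)%R by (apply pow_le_t; lia || lra). unfold V.
      assert (T1 := Cmod_ge_0 b1). assert (T2 := Cmod_ge_0 b2). assert (T3 := Cmod_ge_0 b3).
      assert (Kb * t ^ 4 <= Kb * t)%R by (apply Rmult_le_compat_l; lra).
      nra. }
    assert (Hp' : (Cmod p <= V * t)%R) by (unfold V; nra).
    assert (HVt : (V * t <= 1/4)%R).
    { assert (t * (4 * (V + 1)) <= 1)%R.
      { apply Rmult_le_reg_r with (/ (4 * (V + 1)))%R. apply Rinv_0_lt_compat; lra.
        rewrite Rmult_assoc, Rinv_r by lra. unfold Rdiv in Hd3. lra. }
      nra. }
    assert (Ta := HTa v w ltac:(lra) Hva). rewrite Ha0, Ha1 in Ta. fold a2 a3 in Ta.
    assert (Ta' : (Cmod (w - (0 + 1 * v + a2 * v ^ 2 + a3 * v ^ 3)) <= Ka * V ^ 4 * t ^ 4)%R).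
    { eapply Rle_trans. apply Ta. rewrite Rmult_assoc. apply Rmult_le_compat_l; auto.
      rewrite <- Rpow_mult_distr. apply pow_incr. split; auto. apply Cmod_ge_0. }
    assert (HQ : (Cmod (1 + a2 * (v + p) + a3 * (v ^ 2 + v * p + p ^ 2)) <= Qb)%R).
    { eapply Rle_trans. apply Cmod_tri3. rewrite Cmod_1, !Cmod_mult. unfold Qb.
      assert (t <= 1)%R by lra. assert (V * t <= V)%R by nra.
      assert (A1 : (Cmod (v + p) <= 2 * V)%R). { eapply Rle_trans. apply Cmod_triangle. lra. }
      assert (A2 : (Cmod (v ^ 2 + v * p + p ^ 2) <= 3 * V ^ 2)%R).
      { eapply Rle_trans. apply Cmod_tri3. rewrite !Cmod_pow, Cmod_mult.
        assert (0 <= Cmod v)%R by apply Cmod_ge_0. assert (0 <= Cmod p)%R by apply Cmod_ge_0.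
        simpl. nra. }
      assert (T1 := Cmod_ge_0 a2). assert (T2 := Cmod_ge_0 a3).
      assert (Cmod a2 * Cmod (v + p) <= Cmod a2 * (2 * V))%R by (apply Rmult_le_compat_l; auto).
      assert (Cmod a3 * Cmod (v ^ 2 + v * p + p ^ 2) <= Cmod a3 * (3 * V ^ 2))%R by (apply Rmult_le_compat_l; auto).
      lra. }
    assert (HR : (Cmod (w ^ 4 * csum (fun k => rr a2 a3 b1 b2 b3 k * w ^ k) 5)%C <= t ^ 4 * RB)%R).
    { rewrite Cmod_mult, Cmod_pow, Hw. apply Rmult_le_compat_l. apply pow_le; lra.
      apply poly_bound. lra. }
    rewrite (big_ident a2 a3 b1 b2 b3 w v). fold p.
    unfold Rminus.
    eapply Rle_trans. apply Cmod_tri3. rewrite !Cmod_opp.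
    rewrite Cmod_mult.
    assert (0 <= Cmod (v - (0 + p)))%R by apply Cmod_ge_0.
    assert (0 <= Qb)%R. { assert (T := Cmod_ge_0 (1 + a2 * (v + p) + a3 * (v ^ 2 + v * p + p ^ 2))). lra. }
    assert (Cmod (v - (0 + p)) * Cmod (1 + a2 * (v + p) + a3 * (v ^ 2 + v * p + p ^ 2)) <= Kb * t ^ 4 * Qb)%R.
    { apply Rmult_le_compat; auto. apply Cmod_ge_0. }
    lra. }
  destruct (uniq3 _ _ _ _ d Hd Main) as [E1 [E2 E3]].
  assert (Eb1 : b1 = 1). { replace b1 with ((b1 - 1) + 1) by ring. rewrite E1. ring. }
  rewrite Eb1 in E2, E3.
  assert (Eb2 : b2 = - a2). { replace b2 with ((b2 + a2 * 1 ^ 2) - a2) by ring. rewrite E2. ring. }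
  rewrite Eb2 in E3.
  repeat split; auto.
  replace b3 with ((b3 + 2 * a2 * 1 * - a2 + a3 * 1 ^ 3) + 2 * a2 ^ 2 - a3) by ring. rewrite E3. ring.
Qed.

Lemma comp_coefs (phi h : ps) : h 0%nat = 0 ->
  pscomp phi h 1%nat = phi 1%nat * h 1%nat /\
  pscomp phi h 2%nat = phi 1%nat * h 2%nat + phi 2%nat * h 1%nat ^ 2.
Proof.
  intros H0. unfold pscomp. rewrite s1, s2. unfold psnpow.
  repeat rewrite ?mul0, ?mul1, ?mul2. unfold psone. rewrite H0. split; ring.
Qed.

Lemma qnat2 q : (0 < q < 1)%R -> qnat q 2 = (q + / q)%R.
Proof.
  intros Hq. unfold qnat. assert (/ q > 1)%R. { rewrite <- Rinv_1. apply Rinv_lt_contravar; lra. }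
  assert (q * q < 1)%R by nra.
  field. split; [lra|]. simpl. nra.
Qed.

Lemma qnat3 q : (0 < q < 1)%R -> qnat q 3 = (q * q + 1 + / (q * q))%R.
Proof.
  intros Hq. unfold qnat. assert (q * q < 1)%R by nra.
  field. split; [lra|]. simpl. nra.
Qed.

Lemma qnat2_pos q : (0 < q < 1)%R -> (0 < qnat q 2)%R.
Proof. intros Hq. rewrite qnat2 by auto. assert (0 < / q)%R by (apply Rinv_0_lt_compat; lra). lra. Qed.

Lemma qnat3_ge q : (0 < q < 1)%R -> (3 <= qnat q 3)%R.
Proof.
  intros Hq. rewrite qnat3 by auto. assert (Hp : (0 < q * q)%R) by nra.
  assert (E : (q * q * / (q * q) = 1)%R) by (field; lra).
  assert (0 < / (q * q))%R by (apply Rinv_0_lt_compat; lra).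
  assert (q * q < 1)%R by nra.
  assert (/ (q * q) > 1)%R. { rewrite <- Rinv_1. apply Rinv_lt_contravar; lra. }
  assert ((1 - q * q) * (/ (q * q) - 1) >= 0)%R. { apply Rle_ge, Rmult_le_pos; lra. }
  nra.
Qed.

Lemma Cmod_Cexp z : Cmod (Cexp z) = exp (Re z).
Proof.
  unfold Cexp, Cmod. cbn [fst snd]. assert (T := sin2_cos2 (Im z)). unfold Rsqr in T.
  replace ((exp (Re z) * cos (Im z)) ^ 2 + (exp (Re z) * sin (Im z)) ^ 2)%R with
    (exp (Re z) ^ 2)%R by (simpl; nra).
  apply sqrt_pow2. apply Rlt_le, exp_pos.
Qed.

Lemma qbr_nz q chi : (0 < q < 1)%R -> (0 < Re chi)%R -> qbr q chi <> 0.
Proof.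
  intros Hq Hc. unfold qbr, qpowC.
  assert (Hl : (ln q < 0)%R) by (rewrite <- ln_1; apply ln_increasing; lra).
  assert (Hd : (q - / q <> 0)%R).
  { assert (/ q > 1)%R. { rewrite <- Rinv_1. apply Rinv_lt_contravar; lra. } lra. }
  intro H. unfold Cdiv in H. apply Cmult_integral in H. destruct H as [H|H].
  - assert (E : Cexp (chi * RtoC (ln q)) = Cexp (- chi * RtoC (ln q))).
    { replace (Cexp (chi * RtoC (ln q))) with (Cexp (chi * RtoC (ln q)) - Cexp (- chi * RtoC (ln q)) + Cexp (- chi * RtoC (ln q))) by ring.
      rewrite H. ring. }
    apply (f_equal Cmod) in E. rewrite !Cmod_Cexp in E.
    assert (R1 : Re (chi * RtoC (ln q)) = (Re chi * ln q)%R) by (unfold Re; simpl; ring).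
    assert (R2 : Re (- chi * RtoC (ln q)) = (- (Re chi * ln q))%R) by (unfold Re; simpl; ring).
    rewrite R1, R2 in E. apply exp_inv in E.
    assert (Re chi * ln q < 0)%R by nra. lra.
  - assert (HH : RtoC (q - / q) <> 0). { intro E. apply RtoC_inj in E. auto. }
    assert (T := Cinv_r _ HH). rewrite H, Cmult_0_r in T. apply C1_nz. auto.
Qed.

Lemma Lq_nz q eta n : (0 < q < 1)%R -> (-1 < Re eta)%R -> (1 <= n)%nat -> Lq q eta n <> 0.
Proof.
  intros Hq He Hn. unfold Lq.
  assert (H1 : qbr q (1 + eta) <> 0). { apply qbr_nz; auto. unfold Re in *. simpl. lra. }
  assert (H2 : qbr q (RtoC (INR n) + eta) <> 0).
  { apply qbr_nz; auto. unfold Re in *. simpl. assert (1 <= INR n)%R by (apply (le_INR 1); auto). lra. }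
  intro H. unfold Cdiv in H. apply Cmult_integral in H. destruct H as [H|H]; auto.
  assert (T := Cinv_r _ H2). rewrite H, Cmult_0_r in T. apply C1_nz. auto.
Qed.

Lemma Jq1 q eta (a : ps) : Jq q eta a 1%nat = a 1%nat. Proof. reflexivity. Qed.
Lemma Jq2 q eta (a : ps) : Jq q eta a 2%nat = Lq q eta 2 * a 2%nat. Proof. reflexivity. Qed.
Lemma Jq3 q eta (a : ps) : Jq q eta a 3%nat = Lq q eta 3 * a 3%nat. Proof. reflexivity. Qed.

Lemma C_re (c : C) : Im c = 0%R -> c = RtoC (Re c).
Proof. destruct c as [x y]. unfold Re, Im, RtoC. simpl. intros ->. reflexivity. Qed.

Lemma le_div (X Y D : R) : (0 < D)%R -> (X * D <= Y)%R -> (X <= Y / D)%R.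
Proof. intros HD H. apply Rmult_le_reg_r with D; auto. unfold Rdiv. rewrite Rmult_assoc, Rinv_l by lra. lra. Qed.

Lemma sqrt_bound (A Z : R) : (0 <= A)%R -> (A ^ 2 <= Z)%R -> (A <= sqrt Z)%R.
Proof. intros HA H. rewrite <- (sqrt_pow2 A HA). apply sqrt_le_1_alt. auto. Qed.

Lemma sq_bound (u v : R) : (0 <= u)%R -> (0 <= v)%R -> (u ^ 2 <= v ^ 2)%R -> (u <= v)%R.
Proof. intros Hu Hv H. apply Rnot_lt_le. intro Hl. assert (v * v < u * u)%R by nra. simpl in H. lra. Qed.

Ltac pushR := repeat rewrite ?RtoC_mult, ?RtoC_minus, ?RtoC_plus, ?RtoC_pow.

Theorem theorem2 (q : R) (eta : C) (mu lam : R) (E a : nat -> C) :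
  (0 < q < 1)%R -> (-1 < Re eta)%R -> (0 <= mu)%R -> (1 <= lam)%R ->
  analytic_disk E ->
  (forall z v, inDisk z -> is_pseries E z v -> (0 < Re v)%R) ->
  E 0%nat = 1 -> Im (E 1%nat) = 0%R -> (0 < Re (E 1%nat))%R ->
  let M2 := (mu - (mu - 1) * qnat q 2)%R in
  let M3 := (mu - (mu - 1) * qnat q 3)%R in
  let N := (mu - (mu - 1) * qnat q 2 ^ 2)%R in
  let L2 := Lq q eta 2 in
  let L3 := Lq q eta 3 in
  let E1 := E 1%nat in
  let E2 := E 2%nat in
  let Om := 2 * RtoC (lam * qnat q 3 - 1) * RtoC M3 * L3
            + RtoC lam * RtoC (lam * M2 ^ 2 - N) * RtoC (qnat q 2 ^ 2) * L2 ^ 2 in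
  let Th := 2 * RtoC (lam * qnat q 3 - 1) * RtoC M3 * E1 ^ 2 * L3
            + RtoC lam * (RtoC (lam * M2 ^ 2) * (E1 ^ 2 + 2 * E1 - 2 * E2)
                          - RtoC N * E1 ^ 2) * RtoC (qnat q 2 ^ 2) * L2 ^ 2 in
  M2 <> 0%R -> M3 <> 0%R -> Om <> 0 -> Th <> 0 ->
  in_class q eta mu lam E a ->
  (Cmod (a 2%nat) <=
     Rmin (Rmin (Re E1 / (lam * Cmod (RtoC M2 * L2) * qnat q 2))
                (sqrt (2 * (Cmod (E2 - E1) + Re E1) / Cmod Om)))
          (Re E1 * sqrt (2 * Re E1) / sqrt (Cmod Th)))%R /\
  (Cmod (a 3%nat) <=
     Re E1 / ((lam * qnat q 3 - 1) * Cmod (RtoC M3 * L3))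
     + Rmin (Re E1 ^ 2 / (lam ^ 2 * M2 ^ 2 * qnat q 2 ^ 2 * Cmod L2 ^ 2))
            (2 * (Cmod (E2 - E1) + Re E1) / Cmod Om))%R.
Proof.
  intros Hq He Hmu Hlam HEa HEre HE0 HEim HEre1 M2 M3 N L2 L3 E1 E2 Om Th HM2 HM3 HOm HTh
    [b [HS [[h [hA [h0 [hD hE]]]] [k [kA [k0 [kD kE]]]]]]].
  destruct (inv_coefs_thm a b HS) as [b0 [b1 [b2 b3]]].
  assert (Ha1 : a 1%nat = 1) by apply HS.
  assert (SA := S_coefs q mu lam (Jq q eta a) Hq ltac:(rewrite Jq1; auto)).
  assert (SB := S_coefs q mu lam (Jq q eta b) Hq ltac:(rewrite Jq1; auto)).
  cbv zeta in SA, SB. destruct SA as [SA1 SA2]. destruct SB as [SB1 SB2].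
  rewrite !Jq2 in SA1, SB1. rewrite !Jq2, !Jq3 in SA2, SB2. rewrite b2 in SB1. rewrite b2, b3 in SB2.
  destruct (comp_coefs E h h0) as [CA1 CA2]. destruct (comp_coefs E k k0) as [CB1 CB2].
  rewrite hE, CA1 in SA1. rewrite hE, CA2 in SA2. rewrite kE, CB1 in SB1. rewrite kE, CB2 in SB2.
  destruct (schur h hA h0 hD) as [Sh1 Sh2]. destruct (schur k kA k0 kD) as [Sk1 Sk2].
  fold L2 L3 E1 E2 in SA1, SA2, SB1, SB2.
  set (x := qnat q 2) in *. set (y := qnat q 3) in *.
  set (e := Re E1).
  assert (HE1 : E1 = RtoC e) by (apply C_re; auto).
  assert (He0 : (0 < e)%R) by auto.
  assert (Hx : (0 < x)%R) by (apply qnat2_pos; auto).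
  assert (Hy : (3 <= y)%R) by (apply qnat3_ge; auto).
  assert (HL2 : L2 <> 0) by (apply Lq_nz; auto).
  assert (HL3 : L3 <> 0) by (apply Lq_nz; auto).
  set (a2 := a 2%nat) in *. set (a3 := a 3%nat) in *.
  set (c1 := h 1%nat) in *. set (c2 := h 2%nat) in *. set (d1 := k 1%nat) in *. set (d2 := k 2%nat) in *.
  set (K1r := (lam * x * M2)%R).
  assert (K1 : RtoC K1r * L2 * a2 = E1 * c1).
  { rewrite SA1. unfold K1r, M2. pushR. ring. }
  assert (K1' : RtoC K1r * L2 * a2 = - E1 * d1).
  { replace (- E1 * d1) with (- (E1 * d1)) by ring. rewrite SB1.
    unfold K1r, M2. pushR. ring. }
  assert (Hd1 : d1 = - c1).
  { assert (HH : E1 * c1 = - E1 * d1) by (rewrite <- K1; exact K1').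
    assert (E1 * (d1 + c1) = 0). { rewrite Cmult_plus_distr_l, HH. ring. }
    apply Cmult_integral in H. destruct H as [H|H].
    - exfalso. rewrite HE1 in H. apply RtoC_inj in H. lra.
    - replace d1 with (d1 + c1 - c1) by ring. rewrite H. ring. }
  assert (Sum : Om * a2 ^ 2 = E1 * (c2 + c1 ^ 2) + E1 * (d2 + d1 ^ 2) + 2 * (E2 - E1) * c1 ^ 2).
  { transitivity ((E1 * c2 + E2 * c1 ^ 2) + (E1 * d2 + E2 * d1 ^ 2)).
    - rewrite SA2, SB2. unfold Om, M2, M3, N. pushR. field.
    - rewrite Hd1. ring. }
  assert (ThE : Th * a2 ^ 2 = E1 ^ 3 * ((c2 + c1 ^ 2) + (d2 + d1 ^ 2))).
  { transitivity (E1 ^ 2 * (Om * a2 ^ 2) - 2 * (E2 - E1) * (RtoC K1r * L2 * a2) ^ 2).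
    - unfold Th, Om, K1r, M2, M3, N. pushR. ring.
    - rewrite Sum, K1. rewrite Hd1. ring. }
  set (P := ((lam * y - 1) * M3)%R).
  assert (Diff : 2 * RtoC P * L3 * (a3 - a2 ^ 2) = E1 * (c2 - d2)).
  { transitivity ((E1 * c2 + E2 * c1 ^ 2) - (E1 * d2 + E2 * d1 ^ 2)).
    - rewrite SA2, SB2. unfold P, M3. pushR. ring.
    - rewrite Hd1. ring. }
  assert (Hce : Cmod E1 = e) by (rewrite HE1, Cmod_R, Rabs_pos_eq; lra).
  assert (Bc : (Cmod (c2 + c1 ^ 2) <= 1)%R).
  { eapply Rle_trans. apply Cmod_triangle. rewrite Cmod_pow. lra. }
  assert (Bd : (Cmod (d2 + d1 ^ 2) <= 1)%R).
  { eapply Rle_trans. apply Cmod_triangle. rewrite Cmod_pow. lra. }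
  assert (Hc1 := Cmod_ge_0 c1). assert (Hc2 := Cmod_ge_0 c2).
  assert (Hd2' := Cmod_ge_0 d2).
  set (A := Cmod a2). assert (HA : (0 <= A)%R) by apply Cmod_ge_0.
  assert (BSum : (Cmod Om * A ^ 2 <= 2 * (Cmod (E2 - E1) + e))%R).
  { unfold A. rewrite <- Cmod_pow, <- Cmod_mult, Sum.
    eapply Rle_trans. apply Cmod_tri3. rewrite !Cmod_mult, Cmod_pow, Hce.
    assert (C2 : Cmod 2 = 2%R) by (rewrite Cmod_R, Rabs_pos_eq; lra). rewrite C2.
    assert (T := Cmod_ge_0 (E2 - E1)).
    assert (c1m : (Cmod c1 ^ 2 <= 1)%R) by (simpl; nra).
    assert (e * Cmod (c2 + c1 ^ 2) <= e)%R by nra.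
    assert (e * Cmod (d2 + d1 ^ 2) <= e)%R by nra.
    assert (2 * Cmod (E2 - E1) * Cmod c1 ^ 2 <= 2 * Cmod (E2 - E1))%R by nra.
    lra. }
  assert (BTh : (Cmod Th * A ^ 2 <= 2 * e ^ 3)%R).
  { unfold A. rewrite <- Cmod_pow, <- Cmod_mult, ThE.
    rewrite Cmod_mult, Cmod_pow, Hce.
    assert (Cmod (c2 + c1 ^ 2 + (d2 + d1 ^ 2)) <= 2)%R.
    { eapply Rle_trans. apply Cmod_triangle. lra. }
    assert (0 < e ^ 3)%R by (apply pow_lt; lra). nra. }
  assert (HM2L : (0 < Cmod (RtoC M2 * L2))%R).
  { apply Cmod_gt_0. apply Cmult_neq_0; auto. intro HH. apply RtoC_inj in HH. auto. }
  assert (HM3L : (0 < Cmod (RtoC M3 * L3))%R).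
  { apply Cmod_gt_0. apply Cmult_neq_0; auto. intro HH. apply RtoC_inj in HH. auto. }
  set (DEN1 := (lam * Cmod (RtoC M2 * L2) * x)%R).
  assert (HD1 : (0 < DEN1)%R) by (unfold DEN1; apply Rmult_lt_0_compat; [apply Rmult_lt_0_compat|]; lra).
  assert (BK1 : (A * DEN1 <= e)%R).
  { assert (T : Cmod (RtoC K1r * L2 * a2) = Cmod (E1 * c1)) by (rewrite K1; reflexivity).
    rewrite !Cmod_mult, Hce, Cmod_R in T. unfold K1r in T.
    rewrite !Rabs_mult, (Rabs_pos_eq lam), (Rabs_pos_eq x) in T by lra.
    unfold DEN1, A. rewrite Cmod_mult, Cmod_R.
    replace (Cmod a2 * (lam * (Rabs M2 * Cmod L2) * x))%R with (lam * x * Rabs M2 * Cmod L2 * Cmod a2)%R by ring.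
    rewrite T. nra. }
  set (DEN3 := ((lam * y - 1) * Cmod (RtoC M3 * L3))%R).
  assert (HD3 : (0 < DEN3)%R) by (unfold DEN3; apply Rmult_lt_0_compat; nra).
  assert (BDiff : (Cmod (a3 - a2 ^ 2) * DEN3 <= e)%R).
  { assert (T : Cmod (2 * RtoC P * L3 * (a3 - a2 ^ 2)) = Cmod (E1 * (c2 - d2))) by (rewrite Diff; reflexivity).
    rewrite !Cmod_mult, Hce, !Cmod_R in T. unfold P in T.
    rewrite Rabs_mult, (Rabs_pos_eq (lam * y - 1)), (Rabs_pos_eq 2) in T by nra.
    assert (Cmod (c2 - d2) <= 2)%R.
    { unfold Cminus. eapply Rle_trans. apply Cmod_triangle. rewrite Cmod_opp. nra. }
    unfold DEN3. rewrite Cmod_mult, Cmod_R.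
    assert (0 <= Cmod (a3 - a2 ^ 2) * ((lam * y - 1) * (Rabs M3 * Cmod L3)))%R.
    { assert (T1 := Cmod_ge_0 (a3 - a2 ^ 2)). assert (T2 := Rabs_pos M3). assert (T3 := Cmod_ge_0 L3).
      apply Rmult_le_pos; auto. apply Rmult_le_pos. nra. nra. }
    nra. }
  assert (HOm' : (0 < Cmod Om)%R) by (apply Cmod_gt_0; auto).
  assert (HTh' : (0 < Cmod Th)%R) by (apply Cmod_gt_0; auto).
  assert (A2a : (A ^ 2 <= e ^ 2 / DEN1 ^ 2)%R).
  { apply le_div. apply pow_lt; auto. rewrite <- Rpow_mult_distr. apply pow_incr. split; nra. }
  assert (A2b : (A ^ 2 <= 2 * (Cmod (E2 - E1) + e) / Cmod Om)%R).
  { apply le_div; auto. lra. }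
  split.
  - apply Rmin_glb. apply Rmin_glb.
    + apply le_div; auto.
    + apply sqrt_bound; auto.
    + apply le_div. apply sqrt_lt_R0; auto.
      apply sq_bound. apply Rmult_le_pos; auto. apply sqrt_pos.
      apply Rmult_le_pos. lra. apply sqrt_pos.
      rewrite !Rpow_mult_distr, !pow2_sqrt by lra. nra.
  - assert (T := Cmod_triangle (a3 - a2 ^ 2) (a2 ^ 2)).
    replace (a3 - a2 ^ 2 + a2 ^ 2) with a3 in T by ring. rewrite Cmod_pow in T. fold A in T.
    assert (T2 : (Cmod (a3 - a2 ^ 2) <= e / DEN3)%R) by (apply le_div; auto).
    assert (T3 : (A ^ 2 <= Rmin (e ^ 2 / (lam ^ 2 * M2 ^ 2 * x ^ 2 * Cmod L2 ^ 2))
            (2 * (Cmod (E2 - E1) + e) / Cmod Om))%R).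
    { apply Rmin_glb; auto.
      replace (lam ^ 2 * M2 ^ 2 * x ^ 2 * Cmod L2 ^ 2)%R with (DEN1 ^ 2)%R; auto.
      unfold DEN1. rewrite Cmod_mult, Cmod_R. rewrite <- (pow2_abs M2). ring. }
    lra.
Qed.
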